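(* Let $k\ge1$ and $c\in\mathcal{S}_k^\alpha\setminus\{\mathbf{0}\}$. Then $w_{Hom}(c)=q^{s(k+1)-2}(q-1)$.
   Context: Let $R$ be a finite commutative chain ring with maximal ideal $\langle\gamma\rangle$, nilpotency index $s$ and residue field $R/\langle\gamma\rangle\cong\mathbb{F}_q$. Fix coset representatives $T=\{e_0,\dots,e_{q-1}\}$ with $e_0=0,e_1=1$, ordered $e_0<\dots<e_{q-1}$; each $r\in R$ is uniquely $\sum_{i=0}^{s-1}r_i\gamma^i$, $r_i\in T$; order $R$ by $x>y$ iff $x_i>y_i$ in $T$ for the largest $i$ with $x_i\neq y_i$; list $R=\{\rho_0,\dots,\rho_{q^s-1}\}$ increasingly. $\mathbf{a}^{(m)}$ is the constant vector of length $m$. Define $G_1^\alpha=(\rho_0\ \cdots\ \rho_{q^s-1})$ and, for $k>1$, $G_k^\alpha$ as the $k\times q^{sk}$ matrix of $q^s$ column blocks, the $j$-th having first row $\boldsymbol{\rho_j}^{(q^{s(k-1)})}$ and $G_{k-1}^\alpha$ below. $\mathcal{S}_k^\alpha$ is the $R$-submodule of $R^{q^{sk}}$ generated by the rows of $G_k^\alpha$. Homogeneous weight: for $x\in R$, $w_{Hom}(x)=0$ if $x=0$; $w_{Hom}(x)=(q-1)q^{s-2}$ if $x\neq0$ and $x\notin\langle\gamma^{s-1}\rangle$; $w_{Hom}(x)=q^{s-1}$ if $x\neq0$ and $x\in\langle\gamma^{s-1}\rangle$; extended to $R^n$ by summing over coordinates. *)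

(* Defs.v *)
From HB Require Import structures.
From mathcomp Require Import all_boot all_order all_algebra.
Set Implicit Arguments. Unset Strict Implicit. Unset Printing Implicit Defensive.
Import Order.TTheory GRing.Theory Num.Theory.
Local Open Scope ring_scope.

Section ChainRing.
Variable R : finComNzRingType.

Definition is_ideal (I : {set R}) : bool :=
  [&& (0 : R) \in I,
      [forall x in I, [forall y in I, x + y \in I]] &
      [forall r : R, [forall x in I, r * x \in I]]].

Definition pideal (a : R) : {set R} := [set x | [exists y : R, x == y * a]].

Definition chain_ring : Prop :=
  forall I J : {set R}, is_ideal I -> is_ideal J -> I \subset J \/ J \subset I.

Definition maximal_pideal (gamma : R) : Prop :=
  pideal gamma != [set: R] /\
  forall J : {set R}, is_ideal J -> pideal gamma \subset J ->
    J = pideal gamma \/ J = [set: R].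

Definition coset_reps (q : nat) (gamma : R) (e : 'I_q -> R) : Prop :=
  forall r : R, exists! i : 'I_q, r - e i \in pideal gamma.

(* dig r i is the index in T of the i-th gamma-adic digit of r *)
Definition gamma_digits (q s : nat) (gamma : R) (e : 'I_q -> R)
  (dig : R -> 'I_s -> 'I_q) : Prop :=
  forall r : R, r = \sum_(i < s) e (dig r i) * gamma ^+ i.

Definition Rlt (q s : nat) (dig : R -> 'I_s -> 'I_q) (x y : R) : bool :=
  [exists i : 'I_s,
     [forall j : 'I_s, (i < j)%N ==> (dig x j == dig y j)] &&
     (dig x i < dig y i)%N].

Definition wHom (q s : nat) (gamma : R) (x : R) : nat :=
  if x == 0 then 0%N
  else if x \in pideal (gamma ^+ s.-1) then (q ^ s.-1)%N
  else ((q - 1) * q ^ (s - 2))%N.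

Definition wHom_vec (q s : nat) (gamma : R) (n : nat) (c : 'rV[R]_n) : nat :=
  (\sum_(j < n) wHom q s gamma (c ord0 j))%N.

(* entries of G_k^alpha: Gent rhos k i c is the entry in row i, column c
   (both 0-indexed); rho_j = nth 0 rhos j.  Column block j of G_{k+1} is
   columns j*N^k .. (j+1)*N^k - 1, with first row rho_j and G_k below. *)
Fixpoint Gent (rhos : seq R) (k : nat) : nat -> nat -> R :=
  match k with
  | 0 => fun _ _ => 0
  | k'.+1 => fun i c =>
      match i with
      | 0 => nth 0 rhos (c %/ (#|R| ^ k'))
      | i'.+1 => Gent rhos k' i' (c %% (#|R| ^ k'))
      end
  end.

Definition Gmx (rhos : seq R) (k : nat) : 'M[R]_(k, #|R| ^ k) :=
  \matrix_(i < k, j < #|R| ^ k) Gent rhos k i j.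

Definition Scode (rhos : seq R) (k : nat) : {set 'rV[R]_(#|R| ^ k)} :=
  [set c | [exists a : 'rV[R]_k, c == a *m Gmx rhos k]].

End ChainRing.

(* Main.v *)
Require Import Defs.
From HB Require Import structures.
From mathcomp Require Import all_boot all_order all_algebra.
From mathcomp Require Import zify.
Import Order.TTheory GRing.Theory Num.Theory.
Local Open Scope ring_scope.

Lemma pidealP (R : finComNzRingType) (a x : R) :
  reflect (exists y, x = y * a) (x \in pideal a).
Proof.
rewrite inE; apply: (iffP existsP) => [[y /eqP ->]|[y ->]]; by exists y.
Qed.

Lemma pideal_ideal (R : finComNzRingType) (a : R) : is_ideal (pideal a).
Proof.
apply/and3P; split.
- by apply/pidealP; exists 0; rewrite mul0r.
- apply/forall_inP => x /pidealP [u ->]; apply/forall_inP => y /pidealP [v ->].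
  by apply/pidealP; exists (u + v); rewrite mulrDl.
- apply/forallP => r; apply/forall_inP => x /pidealP [u ->].
  by apply/pidealP; exists (r * u); rewrite mulrA.
Qed.

Arguments pideal_ideal {R}.

Lemma ideal_mul (R : finComNzRingType) (I : {set R}) r x :
  is_ideal I -> x \in I -> r * x \in I.
Proof. by case/and3P => _ _ /forallP H Hx; move/forall_inP: (H r); apply. Qed.

Lemma ideal_add (R : finComNzRingType) (I : {set R}) x y :
  is_ideal I -> x \in I -> y \in I -> x + y \in I.
Proof. by case/and3P => _ /forall_inP H _ Hx Hy; move/forall_inP: (H x Hx); apply. Qed.

Lemma max_bezout (R : finComNzRingType) (gamma z : R) :
  maximal_pideal gamma -> z \notin pideal gamma ->
  exists x w, 1 = gamma * x + z * w.
Proof.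
move=> [_ Hmax] Hz.
pose J := [set v : R | [exists x, [exists w, v == gamma * x + z * w]]].
have HJ : is_ideal J.
  apply/and3P; split.
  - by rewrite inE; apply/existsP; exists 0; apply/existsP; exists 0; rewrite !mulr0 addr0.
  - apply/forall_inP => u; rewrite inE => /existsP [x1 /existsP [w1 /eqP ->]].
    apply/forall_inP => v; rewrite inE => /existsP [x2 /existsP [w2 /eqP ->]].
    rewrite inE; apply/existsP; exists (x1 + x2); apply/existsP; exists (w1 + w2).
    by apply/eqP; rewrite !mulrDr addrACA.
  - apply/forallP => r; apply/forall_inP => u; rewrite inE => /existsP [x1 /existsP [w1 /eqP ->]].
    rewrite inE; apply/existsP; exists (r * x1); apply/existsP; exists (r * w1).
    by apply/eqP; rewrite mulrDr !mulrA ![r * _]mulrC.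
have Hsub : pideal gamma \subset J.
  apply/subsetP => v /pidealP [y ->]; rewrite inE; apply/existsP; exists y.
  by apply/existsP; exists 0; rewrite mulr0 addr0 mulrC.
case: (Hmax J HJ Hsub) => HJe.
  have : z \in J by rewrite inE; apply/existsP; exists 0; apply/existsP; exists 1; rewrite mulr0 add0r mulr1.
  by rewrite HJe (negbTE Hz).
have : (1 : R) \in J by rewrite HJe inE.
by rewrite inE => /existsP [x /existsP [w /eqP ->]]; exists x, w.
Qed.

Arguments max_bezout {R gamma z}.

Lemma exp_big (R : finComNzRingType) (gamma : R) s m :
  gamma ^+ s = 0 -> (s <= m)%N -> gamma ^+ m = 0.
Proof. by move=> H Hm; rewrite -(subnK Hm) exprD H mulr0. Qed.

Arguments exp_big {R gamma s m}.

Lemma ann_soc (R : finComNzRingType) (gamma : R) s w :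
  maximal_pideal gamma -> (0 < s)%N -> gamma ^+ s = 0 -> gamma ^+ s.-1 != 0 ->
  gamma ^+ s.-1 * w = 0 -> w \in pideal gamma.
Proof.
move=> Hmax Hs Hn Hn' Hw; apply/negPn/negP => Hz.
have [x [y H1]] := max_bezout Hmax Hz.
move/eqP: Hn'; apply.
rewrite -[gamma ^+ s.-1]mulr1 H1 mulrDr mulrA -exprSr prednK // Hn mul0r add0r.
by rewrite mulrA Hw mul0r.
Qed.

Lemma reps_inj (R : finComNzRingType) (gamma : R) q (e : 'I_q -> R) i j :
  coset_reps gamma e -> e i - e j \in pideal gamma -> i = j.
Proof.
move=> Hr Hij; have [i0 [_ Hu]] := Hr (e i).
rewrite -(Hu i) ?(Hu j) //; rewrite subrr; apply/pidealP; exists 0; by rewrite mul0r.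
Qed.

Arguments ann_soc {R gamma s w}.
Arguments reps_inj {R gamma q e i j}.

Lemma dsum_inj (R : finComNzRingType) (gamma : R) s q (e : 'I_q -> R)
  (Hmax : maximal_pideal gamma) (Hs : (0 < s)%N) (Hn : gamma ^+ s = 0)
  (Hn' : gamma ^+ s.-1 != 0) (Hr : coset_reps gamma e) :
  injective (fun d : {ffun 'I_s -> 'I_q} => \sum_(i < s) e (d i) * gamma ^+ i).
Proof.
move=> d d' /eqP; rewrite -subr_eq0 -sumrB => /eqP H.
suff H2 : forall t, (t <= s)%N -> forall i : 'I_s, (i < t)%N -> d i = d' i.
  by apply/ffunP => i; apply: (H2 s) => //.
elim=> [|t IH] Ht i Hi //.
move: Hi; rewrite ltnS leq_eqVlt => /orP [/eqP Hit|Hit]; last first.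
  by apply: IH => //; apply: ltnW.
have Ht' : (t < s)%N by [].
have : gamma ^+ s.-1 * (e (d i) - e (d' i)) = 0.
  have := congr1 (fun x => x * gamma ^+ (s.-1 - t)) H.
  rewrite mul0r mulr_suml (bigD1 i) //= big1 ?addr0.
    rewrite -mulrBl -mulrA -exprD Hit subnKC; first by rewrite mulrC.
    lia.
  move=> j Hj; rewrite -mulrBl.
  case: (ltnP j t) => Hjt.
    by rewrite (IH (ltnW Ht) j Hjt) subrr !mul0r.
  have Hjt' : (t < j)%N.
    rewrite ltn_neqAle Hjt andbT -Hit; apply: contra Hj => /eqP Hh; apply/eqP/val_inj.
    by rewrite /= Hh.
  rewrite -mulrA -exprD (exp_big Hn) ?mulr0 //.
  have := ltn_ord j; rewrite -subn1; lia.
by move/(ann_soc Hmax Hs Hn Hn')/(reps_inj Hr).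
Qed.
Arguments dsum_inj {R gamma s q e}.
Lemma card_R (R : finComNzRingType) (gamma : R) s q (e : 'I_q -> R)
  (dig : R -> 'I_s -> 'I_q)
  (Hmax : maximal_pideal gamma) (Hs : (0 < s)%N) (Hn : gamma ^+ s = 0)
  (Hn' : gamma ^+ s.-1 != 0) (Hr : coset_reps gamma e)
  (Hdig : gamma_digits gamma e dig) : #|R| = (q ^ s)%N.
Proof.
have <- : #|{ffun 'I_s -> 'I_q}| = (q ^ s)%N by rewrite card_ffun !card_ord.
apply/eqP; rewrite eqn_leq; apply/andP; split.
  apply: (@leq_card _ _ (fun r => [ffun i => dig r i])) => r r' /ffunP H.
  by rewrite (Hdig r) (Hdig r'); apply: eq_bigr => i _; have := H i; rewrite !ffunE => ->.
exact: leq_card (dsum_inj Hmax Hs Hn Hn' Hr).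
Qed.

Arguments card_R {R gamma s q e dig}.

Lemma soc_eq (R : finComNzRingType) (gamma : R) s q (e : 'I_q -> R)
  (Hn : gamma ^+ s = 0) (Hs : (0 < s)%N) (Hr : coset_reps gamma e) :
  pideal (gamma ^+ s.-1) = [set e i * gamma ^+ s.-1 | i : 'I_q].
Proof.
apply/setP => x; apply/pidealP/imsetP => [[y ->]|[i _ ->]]; last by exists (e i).
have [i [/pidealP [z Hz] _]] := Hr y.
exists i => //; rewrite -(subrK (e i) y) Hz mulrDl -mulrA -exprS prednK //.
by rewrite Hn mulr0 add0r.
Qed.

Arguments soc_eq {R gamma s q e}.

Lemma card_soc (R : finComNzRingType) (gamma : R) s q (e : 'I_q -> R)
  (Hmax : maximal_pideal gamma) (Hs : (0 < s)%N) (Hn : gamma ^+ s = 0)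
  (Hn' : gamma ^+ s.-1 != 0) (Hr : coset_reps gamma e) :
  #|pideal (gamma ^+ s.-1)| = q.
Proof.
rewrite (soc_eq Hn Hs Hr) card_imset ?card_ord // => i j H.
apply: (reps_inj Hr); apply: (ann_soc Hmax Hs Hn Hn').
by rewrite mulrBr ![gamma ^+ _ * _]mulrC H subrr.
Qed.

Arguments card_soc {R gamma s q e}.

Lemma soc_sub (R : finComNzRingType) (gamma : R) s (I : {set R}) y
  (Hchain : chain_ring R)
  (Hmax : maximal_pideal gamma) (Hs : (0 < s)%N) (Hn : gamma ^+ s = 0)
  (HI : is_ideal I) (Hy : y \in I) (Hy0 : y != 0) :
  pideal (gamma ^+ s.-1) \subset I.
Proof.
case: (Hchain _ _ (@pideal_ideal R (gamma ^+ s.-1)) HI) => // HIs.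
have : y \in pideal (gamma ^+ s.-1) by apply: (subsetP HIs).
case/pidealP => z Hz.
have Hzn : z \notin pideal gamma.
  apply/negP => /pidealP [u Hu]; move/eqP: Hy0; apply.
  by rewrite Hz Hu -mulrA -exprS prednK // Hn mulr0.
have [x [w H1]] := max_bezout Hmax Hzn.
have Hg : gamma ^+ s.-1 \in I.
  have -> : gamma ^+ s.-1 = w * y.
    rewrite Hz mulrA [w * z]mulrC -[X in X = _]mul1r H1 mulrDl.
    by rewrite -mulrA [x * _]mulrC mulrA -exprS prednK // Hn mul0r add0r.
  exact: ideal_mul.
by apply/subsetP => v /pidealP [u ->]; apply: ideal_mul.
Qed.

Arguments soc_sub {R gamma s I y}.
Lemma arith q s A I : (0 < s)%N -> (1 < q)%N -> (A + q^(s.-1) = q * q^(s.-1))%N -> (q <= I)%N -> (I <= q^s)%N ->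
  (q * (A + (I - q) * ((q-1) * q^(s-2))) = (q-1) * q^(s.-1) * I)%N.
Proof.
case: s => [//|[|s']] _ Hq HA H1 H2.
  rewrite expn1 in H2; rewrite /= expn0 in HA *.
  have -> : I = q by lia.
  rewrite subnn mul0n addn0; nia.
rewrite /= expnS in HA *.
have -> : (s'.+2 - 2 = s')%N by lia.
move: HA; set Q := (q ^ s')%N; move=> HA.
have [m ->] : exists m, I = (q + m)%N by exists (I - q)%N; lia.
have [r Hr] : exists r, q = r.+1 by exists q.-1; lia.
subst q. have -> : (r.+1 + m - r.+1 = m)%N by lia. have -> : (r.+1 - 1 = r)%N by lia. nia.
Qed.

Lemma Gent_inj (R : finComNzRingType) (rhos : seq R) (Hu : uniq rhos)
  (Hsz : size rhos = #|R|) k : forall j j' : nat,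
  (j < #|R| ^ k)%N -> (j' < #|R| ^ k)%N ->
  (forall i, (i < k)%N -> Gent rhos k i j = Gent rhos k i j') -> j = j'.
Proof.
have HN : (0 < #|R|)%N by apply/card_gt0P; exists 0.
elim: k => [|k IH] j j' Hj Hj' H.
  by rewrite expn0 in Hj Hj'; lia.
have HNk : (0 < #|R| ^ k)%N by rewrite expn_gt0 HN.
have Hd : (j %/ #|R| ^ k = j' %/ #|R| ^ k)%N.
  have : nth 0 rhos (j %/ #|R| ^ k)%N = nth 0 rhos (j' %/ #|R| ^ k)%N by exact: (H 0%N isT).
  have B1 : (j %/ #|R| ^ k < size rhos)%N by rewrite Hsz ltn_divLR // -expnS.
  have B2 : (j' %/ #|R| ^ k < size rhos)%N by rewrite Hsz ltn_divLR // -expnS.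
  by move/eqP; rewrite nth_uniq // => /eqP.
have Hm : (j %% #|R| ^ k = j' %% #|R| ^ k)%N.
  by apply: IH; rewrite ?ltn_pmod // => i Hi; exact: (H i.+1).
by rewrite (divn_eq j (#|R| ^ k)) Hd Hm -divn_eq.
Qed.

Lemma fiber (R : finComNzRingType) k (f : 'rV[R]_k -> R)
  (Hadd : forall x y, f (x + y) = f x + f y) (F : R -> nat) :
  (\sum_x F (f x) = #|[set x | f x == 0%R]| * \sum_(y in [set f x | x in [set: 'rV[R]_k]]) F y)%N.
Proof.
have f0 : f 0 = 0.
  have := Hadd 0 0; rewrite addr0 => H; apply: (addrI (f 0)); by rewrite -H addr0.
have fB : forall x y, f (x - y) = f x - f y.
  by move=> x y; have := Hadd (x - y) y; rewrite subrK => ->; rewrite addrK.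
rewrite (eq_bigl (fun x => x \in [set: 'rV[R]_k])); last by move=> x; rewrite in_setT.
rewrite (partition_big_imset f) big_distrr /=; apply: eq_bigr => y /imsetP [x0 _ ->].
rewrite (eq_bigr (fun _ => F (f x0))); last by move=> x /andP [_ /eqP ->].
rewrite (eq_bigl (fun x => x \in [set x | f x == f x0])); last by move=> x; rewrite !inE.
rewrite sum_nat_const; congr (_ * _)%N.
have -> : [set x | f x == f x0] = [set x + x0 | x in [set x | f x == 0]].
  apply/setP => x; rewrite inE; apply/eqP/imsetP => [H|[x1 H1 ->]].
    by exists (x - x0); rewrite ?inE ?fB ?H ?subrr ?subrK.
  by rewrite Hadd; move: H1; rewrite inE => /eqP ->; rewrite add0r.
by rewrite card_imset //; apply: addIr.
Qed.

Lemma wsum (R : finComNzRingType) (gamma : R) s q (e : 'I_q -> R)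
  (dig : R -> 'I_s -> 'I_q) (Hchain : chain_ring R)
  (Hmax : maximal_pideal gamma) (Hs : (0 < s)%N) (Hn : gamma ^+ s = 0)
  (Hn' : gamma ^+ s.-1 != 0) (Hq : (1 < q)%N) (Hr : coset_reps gamma e)
  (Hdig : gamma_digits gamma e dig)
  (I : {set R}) (HI : is_ideal I) y0 (Hy0 : y0 \in I) (Hy00 : y0 != 0) :
  (q * \sum_(y in I) wHom q s gamma y = (q - 1) * q ^ s.-1 * #|I|)%N.
Proof.
set soc := pideal (gamma ^+ s.-1).
have Hsub : soc \subset I := soc_sub Hchain Hmax Hs Hn HI Hy0 Hy00.
have Hcs : #|soc| = q := card_soc Hmax Hs Hn Hn' Hr.
have HcR : #|R| = (q ^ s)%N := card_R Hmax Hs Hn Hn' Hr Hdig.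
have H0 : (0 : R) \in soc by apply/pidealP; exists 0; rewrite mul0r.
rewrite (big_setID soc) /= (setIidPr Hsub).
have S1 : (\sum_(y in soc) wHom q s gamma y + q ^ s.-1 = q * q ^ s.-1)%N.
  rewrite -{3}Hcs -sum_nat_const [in RHS](bigD1 0) //= [in LHS](bigD1 0) //=.
  rewrite {1}/wHom eqxx add0n addnC; congr (_ + _)%N.
  apply: eq_bigr => y /andP [Hy Hy0']; by rewrite /wHom (negbTE Hy0') Hy.
have S2 : (\sum_(y in I :\: soc) wHom q s gamma y = #|I :\: soc| * ((q - 1) * q ^ (s - 2)))%N.
  rewrite -sum_nat_const; apply: eq_bigr => y; rewrite inE => /andP [Hns HyI].
  have Hy0' : y != 0 by apply: contraNneq Hns => ->.
  by rewrite /wHom (negbTE Hy0') (negbTE Hns).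
have cD : #|I :\: soc| = (#|I| - q)%N by rewrite cardsD (setIidPr Hsub) Hcs.
have HIle : (#|I| <= q ^ s)%N by rewrite -HcR max_card.
have HIge : (q <= #|I|)%N by rewrite -Hcs subset_leq_card.
rewrite S2 cD; apply: arith => //.
Qed.

Arguments wsum {R gamma s q e dig}.
Arguments Gent_inj {R rhos} Hu Hsz {k j j'}.
Arguments fiber {R k f}.

Theorem proposition3p14
  (R : finComNzRingType) (gamma : R) (s q : nat)
  (e : 'I_q -> R) (dig : R -> 'I_s -> 'I_q) (rhos : seq R) (k : nat)
  (Hchain : chain_ring R)
  (Hmax : maximal_pideal gamma)
  (Hs : (0 < s)%N) (Hnil : gamma ^+ s = 0) (Hnil' : gamma ^+ s.-1 != 0)
  (Hq : (1 < q)%N)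
  (Hreps : coset_reps gamma e)
  (He0 : forall i : 'I_q, nat_of_ord i = 0%N -> e i = 0)
  (He1 : forall i : 'I_q, nat_of_ord i = 1%N -> e i = 1)
  (Hdig : gamma_digits gamma e dig)
  (Hrhos_all : forall x : R, x \in rhos)
  (Hrhos_uniq : uniq rhos)
  (Hrhos_sorted : sorted (Rlt dig) rhos)
  (Hk : (1 <= k)%N)
  (c : 'rV[R]_(#|R| ^ k)) (Hc : c \in Scode rhos k) (Hc0 : c != 0) :
  wHom_vec q s gamma c = (q ^ (s * (k + 1) - 2) * (q - 1))%N.
Proof.
move: Hc; rewrite inE => /existsP [a /eqP Hca].
have Hsz : size rhos = #|R|.
  move/card_uniqP: Hrhos_uniq => <-; apply: eq_card => x; by rewrite Hrhos_all.
pose col := fun j : 'I_(#|R| ^ k) => \row_(i < k) Gent rhos k i j.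
pose f := fun x : 'rV[R]_k => \sum_i a ord0 i * x ord0 i.
have Hcj : forall j, c ord0 j = f (col j).
  move=> j; rewrite Hca !mxE; apply: eq_bigr => i _; by rewrite !mxE.
have Hcol_inj : injective col.
  move=> j j' H; apply: val_inj; apply: (Gent_inj Hrhos_uniq Hsz (ltn_ord j) (ltn_ord j')).
  move=> i Hi; have := congr1 (fun m : 'rV[R]_k => m ord0 (Ordinal Hi)) H; by rewrite !mxE.
have Hbij : bijective col.
  apply: (inj_card_bij Hcol_inj); by rewrite card_mx card_ord mul1n.
have E1 : wHom_vec q s gamma c = (\sum_x wHom q s gamma (f x))%N.
  rewrite [RHS](reindex col) /=; last exact: onW_bij.
  by apply: eq_bigr => j _; rewrite Hcj.
have [i Hai] : exists i, a ord0 i != 0.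
  case: (boolP [exists i, a ord0 i != 0]) => [/existsP //|/existsPn Hn].
  move/eqP: Hc0; case; rewrite Hca.
  have -> : a = 0 by apply/rowP => i; rewrite mxE; apply/eqP; rewrite -[_ == _]negbK Hn.
  by rewrite mul0mx.
have Hadd : forall x y, f (x + y) = f x + f y.
  by move=> x y; rewrite /f -big_split; apply: eq_bigr => j _; rewrite mxE mulrDr.
set Im := [set f x | x in [set: 'rV[R]_k]].
have HIm : is_ideal Im.
  apply/and3P; split.
  - apply/imsetP; exists 0 => //; rewrite /f big1 // => j _; by rewrite mxE mulr0.
  - apply/forall_inP => u /imsetP [x _ ->]; apply/forall_inP => v /imsetP [y _ ->].
    by rewrite -Hadd; apply/imsetP; exists (x + y).
  - apply/forallP => r; apply/forall_inP => u /imsetP [x _ ->].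
    apply/imsetP; exists (r *: x) => //; rewrite /f mulr_sumr; apply: eq_bigr => j _.
    by rewrite mxE mulrCA.
have Hy0 : a ord0 i \in Im.
  apply/imsetP; exists (delta_mx ord0 i) => //; rewrite /f (bigD1 i) //= big1 ?addr0.
    by rewrite mxE !eqxx mulr1.
  by move=> j Hj; rewrite mxE (negbTE Hj) andbF mulr0.
have HS := wsum Hchain Hmax Hs Hnil Hnil' Hq Hreps Hdig Im HIm _ Hy0 Hai.
have HcR : #|R| = (q ^ s)%N := card_R Hmax Hs Hnil Hnil' Hreps Hdig.
have Hf := fiber Hadd (wHom q s gamma).
have Hf1 : (\sum_(x : 'rV[R]_k) 1 = #|[set x | f x == 0%R]| * \sum_(y in Im) 1)%N
  := fiber Hadd (fun _ => 1%N).
have HT : (\sum_(x : 'rV[R]_k) 1 = #|'rV[R]_k|)%N by rewrite sum1_card.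
rewrite HT sum1_card card_mx mul1n HcR -expnM in Hf1.
rewrite E1 Hf; move: Hf1 HS; set K := #|[set x | f x == 0%R]|; set S := (\sum_(y in Im) _)%N.
move=> HK HS.
apply/eqP; rewrite -(eqn_pmul2l (ltnW Hq)) mulnCA HS.
rewrite [(K * _)%N]mulnC -!mulnA [(#|Im| * K)%N]mulnC -HK -expnD.
rewrite mulnA -expnS mulnC.
have -> : (s.-1 + s * k = (s * (k + 1) - 2).+1)%N by lia.
by [].
Qed.
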